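(* Let $X$ be a locally connected topological space. Then the functor $U\mapsto\pi_0(U)$ (the set of connected components of $U$) is a terminal object of the category of cosheaves of sets on $X$.
   Context: $\mathfrak{Off}(X)$ is the poset of open subsets of $X$ viewed as a category; for $V\subseteq U$ open, $\pi_0(V)\to\pi_0(U)$ sends a component of $V$ to the component of $U$ containing it. A functor $G:\mathfrak{Off}(X)\to\mathbf{Sets}$ is a cosheaf if for every open $U$ and every open covering $U=\bigcup_iU_i$, the map $\coprod_iG(U_i)\to G(U)$ exhibits $G(U)$ as the coequaliser of the two maps $\coprod_{i,j}G(U_i\cap U_j)\rightrightarrows\coprod_iG(U_i)$ induced by the inclusions. The category of cosheaves of sets on $X$ has as morphisms the natural transformations. *)

(* Defs.v *)
From HB Require Import structures.
From mathcomp Require Import all_boot all_order.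
From mathcomp Require Import all_classical all_reals topology.
Set Implicit Arguments. Unset Strict Implicit. Unset Printing Implicit Defensive.
Local Open Scope classical_set_scope.

Definition locally_connected (X : topologicalType) : Prop :=
  forall (U : set X) (x : X), open U -> U x ->
    exists V : set X, [/\ open V, connected V, V x & V `<=` U].

Record OpenSet (X : topologicalType) := MkOpen { oset :> set X; oset_open : open oset }.

Definition OpenI (X : topologicalType) (U V : OpenSet X) : OpenSet X :=
  MkOpen (openI (oset_open U) (oset_open V)).

Lemma OpenI_subl (X : topologicalType) (U V : OpenSet X) : OpenI U V `<=` U.
Proof. by move=> x []. Qed.
Lemma OpenI_subr (X : topologicalType) (U V : OpenSet X) : OpenI U V `<=` V.
Proof. by move=> x []. Qed.

Definition is_functor (X : topologicalType) (G : OpenSet X -> Type)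
  (Gm : forall V U : OpenSet X, V `<=` U -> G V -> G U) : Prop :=
  (forall (U : OpenSet X) (h : U `<=` U) (a : G U), Gm U U h a = a) /\
  (forall (W V U : OpenSet X) (h1 : W `<=` V) (h2 : V `<=` U) (h3 : W `<=` U) (a : G W),
      Gm W U h3 a = Gm V U h2 (Gm W V h1 a)).

Definition is_coequalizer (A B C : Type) (f g : B -> A) (q : A -> C) : Prop :=
  (forall b, q (f b) = q (g b)) /\
  forall (T : Type) (k : A -> T), (forall b, k (f b) = k (g b)) ->
    exists! h : C -> T, forall a, h (q a) = k a.

Definition is_cosheaf (X : topologicalType) (G : OpenSet X -> Type)
  (Gm : forall V U : OpenSet X, V `<=` U -> G V -> G U) : Prop :=
  forall (U : OpenSet X) (I : Type) (Ui : I -> OpenSet X)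
         (cov : \bigcup_i (Ui i : set X) = U) (sub : forall i, Ui i `<=` U),
  is_coequalizer
    (fun p : {ij : I * I & G (OpenI (Ui ij.1) (Ui ij.2))} =>
       existT (fun i => G (Ui i)) (projT1 p).1
         (Gm _ _ (@OpenI_subl X (Ui (projT1 p).1) (Ui (projT1 p).2)) (projT2 p)))
    (fun p : {ij : I * I & G (OpenI (Ui ij.1) (Ui ij.2))} =>
       existT (fun i => G (Ui i)) (projT1 p).2
         (Gm _ _ (@OpenI_subr X (Ui (projT1 p).1) (Ui (projT1 p).2)) (projT2 p)))
    (fun a : {i : I & G (Ui i)} => Gm _ _ (sub (projT1 a)) (projT2 a)).

Definition is_natural (X : topologicalType) (G H : OpenSet X -> Type)
  (Gm : forall V U : OpenSet X, V `<=` U -> G V -> G U)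
  (Hm : forall V U : OpenSet X, V `<=` U -> H V -> H U)
  (eta : forall U, G U -> H U) : Prop :=
  forall (V U : OpenSet X) (h : V `<=` U) (a : G V), eta U (Gm V U h a) = Hm V U h (eta V a).

Definition pi0 (X : topologicalType) (U : OpenSet X) : Type :=
  {C : set X | exists x, oset U x /\ C = connected_component (oset U) x}.

(* For V <= U: a component C of V goes to the component of U containing
   (a chosen point of, hence all of) C. *)
Definition pi0_map (X : topologicalType) (V U : OpenSet X) (h : V `<=` U)
  (C : pi0 V) : pi0 U :=
  let x := proj1_sig (cid (proj2_sig C)) in
  let Hx := proj2_sig (cid (proj2_sig C)) in
  exist _ (connected_component (oset U) x) (ex_intro _ x (conj (h x (proj1 Hx)) erefl)).

(* Main.v *)
Require Import Defs.
From mathcomp Require Import all_boot all_order.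
From mathcomp Require Import all_classical all_reals topology.
Set Implicit Arguments. Unset Strict Implicit. Unset Printing Implicit Defensive.
Local Open Scope classical_set_scope.

Section Helpers.
Variable X : topologicalType.

Lemma open_local (A : set X) :
  (forall z, A z -> exists2 V, open V & V z /\ V `<=` A) -> open A.
Proof.
move=> H.
have -> : A = \bigcup_(V in [set V | open V /\ V `<=` A]) V.
  apply/seteqP; split => [z Az|z [V [_ VA] Vz]]; last exact: VA.
  by have [V oV [Vz VA]] := H z Az; exists V.
by apply: bigcup_open => V [].
Qed.

Lemma comp_mem (V : set X) x y : connected_component V x y -> V x.
Proof.
move=> cy; have [//|nVx] := pselect (V x).
by move: cy; rewrite connected_component_out.
Qed.

Lemma comp_mono (V U : set X) x y : V `<=` U ->
  connected_component V x y -> connected_component U x y.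
Proof.
move=> VU cy; have Vx := comp_mem cy.
apply: (connected_component_max (B := connected_component V x)) => //.
- exact: connected_component_refl.
- by move=> z /connected_component_sub /VU.
- exact: component_connected.
Qed.

Lemma comp_open (hX : locally_connected X) (U : set X) x :
  open U -> open (connected_component U x).
Proof.
move=> oU; apply: open_local => z cz.
have Uz := connected_component_sub cz.
have [V [oV cV Vz VU]] := hX U z oU Uz.
exists V => //; split => //.
rewrite (same_connected_component cz).
exact: connected_component_max.
Qed.

Lemma pi0_eq (U : OpenSet X) (C D : pi0 U) : proj1_sig C = proj1_sig D -> C = D.
Proof.
case: C D => [c pc] [d pd] /= e; subst.
by congr exist; exact: Prop_irrelevance.
Qed.

Lemma pi0_sub (U : OpenSet X) (C : pi0 U) : proj1_sig C `<=` U.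
Proof. by case: C => c [x [Ux e]]; subst c; exact: connected_component_sub. Qed.

Lemma pi0_pt (U : OpenSet X) (C : pi0 U) : exists y, proj1_sig C y.
Proof. by case: C => c [x [Ux e]]; subst c; exists x; exact: connected_component_refl. Qed.

Lemma pi0_val (V U : OpenSet X) (h : V `<=` U) (C : pi0 V) y :
  proj1_sig C y -> proj1_sig (pi0_map h C) = connected_component U y.
Proof.
rewrite /pi0_map /=; case: (cid _) => x [Vx Cx] /=.
rewrite Cx => cy; apply: same_connected_component.
exact: comp_mono cy.
Qed.

Definition comp_el (U : OpenSet X) z (Hz : oset U z) : pi0 U :=
  exist _ (connected_component U z) (ex_intro _ z (conj Hz (erefl (connected_component (oset U) z)))).

Lemma pi0_repr (U : OpenSet X) (C : pi0 U) y (cy : proj1_sig C y) :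
  C = comp_el (pi0_sub cy).
Proof.
apply: pi0_eq; move: cy; case: C => c [x [Ux e]]; subst c => /= cy.
exact: same_connected_component.
Qed.

Lemma pi0_functor : is_functor (@pi0_map X).
Proof.
split.
  move=> U h a; apply: pi0_eq; have [y Cy] := pi0_pt a.
  rewrite (pi0_val h Cy); move: Cy; case: a => c [x [Ux e]]; subst c => /= cy.
  by symmetry; exact: same_connected_component.
move=> W V U h1 h2 h3 a; apply: pi0_eq; have [y Cy] := pi0_pt a.
rewrite (pi0_val h3 Cy); have Vy : oset V y := h1 _ (pi0_sub Cy).
rewrite (@pi0_val _ _ h2 _ y) //.
rewrite (pi0_val h1 Cy); exact: connected_component_refl.
Qed.

Lemma conn_clopen (K O O' : set X) : connected K -> open O -> open O' ->
  (forall z, K z -> (O z <-> ~ O' z)) -> (exists z, K z /\ O z) -> K `<=` O.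
Proof.
move=> cK oO oO' iff [z [Kz Oz]].
have := cK (K `&` O).
have e : K `&` O = K.
  apply: cK; first by exists z.
  - by exists O.
  - exists (~` O'); first exact: open_closedC.
    apply/seteqP; split => w [Kw Hw]; split => //; by apply/(iff w Kw).
by move=> _ w Kw; rewrite -e in Kw; case: Kw.
Qed.

End Helpers.

Section Cosh.
Variable X : topologicalType.
Hypothesis hX : locally_connected X.

Lemma pi0_cosheaf : is_cosheaf (@pi0_map X).
Proof.
move=> U I Ui cov sub; split.
  move=> [[i j] c] /=; apply: pi0_eq.
  have [y cy] := pi0_pt c.
  have Ijy := pi0_sub cy.
  have Uiy : oset (Ui i) y := OpenI_subl Ijy.
  have Ujy : oset (Ui j) y := OpenI_subr Ijy.
  rewrite (@pi0_val _ _ _ (sub i) _ y); last first.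
    by rewrite (pi0_val _ cy); exact: connected_component_refl.
  rewrite (@pi0_val _ _ _ (sub j) _ y) //.
  by rewrite (pi0_val _ cy); exact: connected_component_refl.
move=> T k kE.
set q := fun a : {i : I & pi0 (Ui i)} => pi0_map (sub (projT1 a)) (projT2 a).
have surj : forall K : pi0 U, exists a, q a = K.
  move=> [c [x [Ux e]]]; subst c.
  have Ux' := Ux; rewrite -cov in Ux'; case: Ux' => i _ Uix.
  exists (existT _ i (comp_el Uix)); apply: pi0_eq.
  rewrite /q (@pi0_val _ _ _ _ _ x) //=; exact: connected_component_refl.
have clA : forall j z w (Hz : oset (Ui j) z) (Hw : oset (Ui j) w),
    connected_component (Ui j) z w -> comp_el Hz = comp_el Hw.
  by move=> j z w Hz Hw czw; apply: pi0_eq => /=; exact: same_connected_component.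
have clB : forall j l z (Hj : oset (Ui j) z) (Hl : oset (Ui l) z),
    k (existT _ j (comp_el Hj)) = k (existT _ l (comp_el Hl)).
  move=> j l z Hj Hl.
  have Hjl : oset (OpenI (Ui j) (Ui l)) z by split.
  have := kE (existT _ (j, l) (comp_el Hjl)) => /=.
  have e1 : forall h, pi0_map h (comp_el Hjl) = comp_el Hj.
    move=> h; apply: pi0_eq; rewrite (@pi0_val _ _ _ h _ z) //.
    exact: connected_component_refl.
  have e2 : forall h, pi0_map h (comp_el Hjl) = comp_el Hl.
    move=> h; apply: pi0_eq; rewrite (@pi0_val _ _ _ h _ z) //.
    exact: connected_component_refl.
  by rewrite e1 e2.
have wd : forall a b, q a = q b -> k a = k b.
  move=> [i c] [l d]; rewrite /q /= => eq.
  have [x cx] := pi0_pt c.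
  have Uix := pi0_sub cx.
  have cE : c = comp_el Uix by rewrite {1}(pi0_repr cx); congr comp_el; exact: Prop_irrelevance.
  pose good z := exists j (Hz : oset (Ui j) z),
    k (existT _ j (comp_el Hz)) = k (existT _ i c).
  have goodI : forall j z (Hz : oset (Ui j) z), good z ->
      k (existT _ j (comp_el Hz)) = k (existT _ i c).
    by move=> j z Hz [j' [Hz' <-]]; exact: clB.
  pose Og := [set z | oset U z /\ good z].
  pose On := [set z | oset U z /\ ~ good z].
  have oOg : open Og.
    apply: open_local => z [Uz gz].
    have [j [Hz _]] := gz.
    exists (connected_component (Ui j) z).
      exact: comp_open (oset_open _).
    split; first exact: connected_component_refl.
    move=> w czw; have Hw := connected_component_sub czw.
    split; first exact: sub Hw.
    exists j, Hw; rewrite -(clA _ _ _ Hz Hw czw); exact: goodI.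
  have oOn : open On.
    apply: open_local => z [Uz ngz].
    have Uz' := Uz; rewrite -cov in Uz'; case: Uz' => j _ Hz.
    exists (connected_component (Ui j) z).
      exact: comp_open (oset_open _).
    split; first exact: connected_component_refl.
    move=> w czw; have Hw := connected_component_sub czw.
    split; first exact: sub Hw.
    move=> gw; apply: ngz; exists j, Hz.
    by rewrite (clA _ _ _ Hz Hw czw); exact: goodI.
  have Ux : oset U x := sub i x Uix.
  have KO : connected_component U x `<=` Og.
    apply: (@conn_clopen _ _ _ On) => //.
    - exact: component_connected.
    - move=> z /connected_component_sub Uz; split.
        by move=> [_ gz] [_ ngz].
      move=> nOn; split => //; apply: contrapT => ngz; exact: nOn.
    - exists x; split; first exact: connected_component_refl.
      split => //; exists i, Uix; by rewrite -cE.
  have [y dy] := pi0_pt d.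
  have Uly := pi0_sub dy.
  have : proj1_sig (pi0_map (sub i) c) = proj1_sig (pi0_map (sub l) d) by rewrite eq.
  rewrite (pi0_val _ cx) (pi0_val _ dy) => Exy.
  have Uy : oset U y := sub l y Uly.
  have : connected_component U x y by rewrite Exy; exact: connected_component_refl.
  move=> /KO [_ gy]; rewrite (pi0_repr dy); symmetry; exact: goodI.
exists (fun K => k (projT1 (cid (surj K)))); split.
  move=> a /=; case: cid => b hb; exact: wd.
move=> h' H'; apply: funext => K /=; case: cid => b hb /=.
by rewrite -hb H'.
Qed.

End Cosh.

Lemma coeq_surj (A B C : Type) (f g : B -> A) (q : A -> C) :
  is_coequalizer f g q -> forall c, exists a, q a = c.
Proof.
move=> [_ H] c.
have [h [_ uh]] := H Prop (fun _ => True) (fun _ => erefl).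
have e1 := uh (fun _ => True) (fun _ => erefl).
have e2 := uh (fun c => exists a, q a = c) (fun a => propext (conj (fun _ => I) (fun _ => ex_intro _ a erefl))).
have : (fun _ : C => True) = (fun c => exists a, q a = c) by rewrite -e1 -e2.
by move/(congr1 (fun F => F c)) => <-.
Qed.

Section Term.
Variable X : topologicalType.
Hypothesis hX : locally_connected X.

Lemma pi0_open (U : OpenSet X) (c : pi0 U) : open (proj1_sig c).
Proof. case: c => c [x [Ux e]]; subst c; exact: comp_open (oset_open U). Qed.

Definition CU (U : OpenSet X) (c : pi0 U) : OpenSet X := MkOpen (pi0_open c).

Lemma CU_cov (U : OpenSet X) : \bigcup_c (@CU U c : set X) = U.
Proof.
apply/seteqP; split => [z [c _ cz]|z Uz]; first exact: pi0_sub cz.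
by exists (comp_el Uz) => //; exact: connected_component_refl.
Qed.

Lemma CU_sub (U : OpenSet X) (c : pi0 U) : CU c `<=` U.
Proof. exact: (@pi0_sub X U c). Qed.

Variables (G : OpenSet X -> Type)
  (Gm : forall V U : OpenSet X, V `<=` U -> G V -> G U).
Hypotheses (fG : is_functor Gm) (cG : is_cosheaf Gm).

Lemma G0 (W : OpenSet X) : oset W = set0 -> G W -> False.
Proof.
move=> W0 a.
pose Ui := fun i : Empty_set => match i return OpenSet X with end.
have cov : \bigcup_(i in @setT Empty_set) (oset (Ui i)) = W.
  by rewrite W0; apply/seteqP; split => z // [[]].
have [_ H] := @cG W Empty_set Ui cov (fun i => match i with end).
have [h [hP _]] := H False (fun a => match projT1 a with end) (fun b => match (projT1 b).1 with end).
exact: h a.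
Qed.

Lemma GmPI (V U : OpenSet X) (h h' : V `<=` U) a : Gm h a = Gm h' a.
Proof. by rewrite (Prop_irrelevance h h'). Qed.

Lemma CU_disj (U : OpenSet X) (c d : pi0 U) : c <> d -> oset (OpenI (CU c) (CU d)) = set0.
Proof.
move=> ncd; apply/seteqP; split => // z [cz dz]; apply: ncd.
by rewrite (pi0_repr cz) (pi0_repr dz); congr comp_el; exact: Prop_irrelevance.
Qed.

Lemma eta_ex (U : OpenSet X) : {e : G U -> pi0 U |
  forall a : {c : pi0 U & G (CU c)}, e (Gm (@CU_sub U (projT1 a)) (projT2 a)) = projT1 a}.
Proof.
have [_ H] := cG (CU_cov U) (@CU_sub U).
have kE : forall b : {ij : pi0 U * pi0 U & G (OpenI (CU ij.1) (CU ij.2))},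
    projT1 (existT (fun i => G (CU i)) (projT1 b).1 (Gm (OpenI_subl (V:=CU (projT1 b).2)) (projT2 b)))
  = projT1 (existT (fun i => G (CU i)) (projT1 b).2 (Gm (OpenI_subr (V:=CU (projT1 b).2)) (projT2 b))).
  move=> [[c d] e] /=; apply: contrapT => ncd.
  exact: G0 (CU_disj ncd) e.
have := H (pi0 U) (fun a : {c : pi0 U & G (CU c)} => projT1 a) kE.
move=> /cid [e [eP _]]; by exists e.
Qed.

Definition eta U := proj1_sig (eta_ex U).
Lemma etaP U (a : {c : pi0 U & G (CU c)}) : eta (Gm (@CU_sub U (projT1 a)) (projT2 a)) = projT1 a.
Proof. exact: (proj2_sig (eta_ex U)). Qed.

Lemma Gsurj (U : OpenSet X) (a : G U) :
  exists b : {c : pi0 U & G (CU c)}, Gm (@CU_sub U (projT1 b)) (projT2 b) = a.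
Proof. exact: coeq_surj (cG (CU_cov U) (@CU_sub U)) a. Qed.

Lemma nat_val (eta' : forall U, G U -> pi0 U) : is_natural Gm (@pi0_map X) eta' ->
  forall U (c : pi0 U) (b : G (CU c)) (h : CU c `<=` U), eta' U (Gm h b) = c.
Proof.
move=> nE U c b h; rewrite nE; apply: pi0_eq.
have [y ey] := pi0_pt (eta' (CU c) b).
rewrite (pi0_val h ey).
have cy : proj1_sig c y := pi0_sub ey.
by rewrite [in RHS](pi0_repr cy).
Qed.

Lemma eta_nat : is_natural Gm (@pi0_map X) eta.
Proof.
move=> V U h a.
have [[c b] <-] := Gsurj a; rewrite etaP /=.
have [y cy] := pi0_pt c.
have Uy : oset U y := h y (pi0_sub cy).
pose c' := comp_el Uy.
have sc : CU c `<=` CU c'.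
  move=> z cz; apply: comp_mono h _.
  by rewrite /= (pi0_repr cy) in cz.
have e1 : pi0_map h c = c'.
  by apply: pi0_eq; rewrite (pi0_val h cy).
rewrite e1 -(proj2 fG _ _ _ _ h (fun z hz => h z (CU_sub hz))).
rewrite (proj2 fG _ _ _ sc (@CU_sub U c') (fun z hz => h z (CU_sub hz))).
by rewrite (etaP (existT _ c' (Gm sc b))).
Qed.

End Term.

Theorem corollary2p5 (X : topologicalType) (hX : locally_connected X) :
  is_functor (@pi0_map X) /\ is_cosheaf (@pi0_map X) /\
  forall (G : OpenSet X -> Type) (Gm : forall V U : OpenSet X, V `<=` U -> G V -> G U),
    is_functor Gm -> is_cosheaf Gm ->
    exists eta : forall U, G U -> pi0 U,
      is_natural Gm (@pi0_map X) eta /\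
      forall eta' : forall U, G U -> pi0 U,
        is_natural Gm (@pi0_map X) eta' -> forall U a, eta' U a = eta U a.
Proof.
split; first exact: pi0_functor.
split; first exact: pi0_cosheaf.
move=> G Gm fG cG.
have nE := eta_nat hX fG cG.
exists (eta hX cG); split => // eta' nE' U a.
have [[c b] <-] := Gsurj hX cG a.
by rewrite (nat_val nE') (nat_val nE).
Qed.
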